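(* Let $S$ be a countable discrete inverse semigroup with identity, $\alpha\colon S\to\mathcal I(X)$ a representation and $\mathrm{Typ}(\alpha)$ its type semigroup, equipped with the algebraic preorder. Then: (a) for $x,y\in\mathrm{Typ}(\alpha)$, if $x\le y$ and $y\le x$ then $x=y$; (b) a subset $A\subseteq X$ is $S$-paradoxical if and only if $[A]=2[A]$; (c) for $x,y\in\mathrm{Typ}(\alpha)$ and $n\ge1$, if $nx=ny$ then $x=y$; (d) for $x\in\mathrm{Typ}(\alpha)$, if $(n+1)x\le nx$ for some $n\in\mathbb N$, then $x=2x$.
   Context: Inverse semigroup: each $s$ has a unique $s^*$ with $ss^*s=s$, $s^*ss^*=s^*$. A representation is a unital homomorphism $\alpha\colon S\to\mathcal I(X)$ into partial bijections of $X$; $D_{s^*s}$ is the domain of $\alpha_s$. $\mathrm{Typ}(\alpha)$ is the commutative monoid generated by symbols $[A]$, $A\subseteq X$, subject to: $[\emptyset]=0$; $[A]=[\alpha_s(A)]$ whenever $s\in S$, $A\subseteq D_{s^*s}$; $[A\cup B]=[A]+[B]$ whenever $A\cap B=\emptyset$. The algebraic preorder: $x\le y$ iff $x+z=y$ for some $z$; $nx$ denotes the $n$-fold sum. $A\subseteq X$ is $S$-paradoxical if there are $A_i,B_j\subseteq X$, $s_i,t_j\in S$ with $A_i\subseteq D_{s_i^*s_i}$, $B_j\subseteq D_{t_j^*t_j}$, $A=\bigsqcup_{i=1}^n\alpha_{s_i}(A_i)=\bigsqcup_{j=1}^m\alpha_{t_j}(B_j)\supseteq A_1\sqcup\dots\sqcup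 A_n\sqcup B_1\sqcup\dots\sqcup B_m$. *)

(* Defs.v *)
From Stdlib Require Import List Arith.
Import ListNotations.
Set Implicit Arguments.

Record InvSemigroup := {
  isg_car :> Type;
  isg_mul : isg_car -> isg_car -> isg_car;
  isg_one : isg_car;
  isg_star : isg_car -> isg_car;
  isg_assoc : forall a b c, isg_mul a (isg_mul b c) = isg_mul (isg_mul a b) c;
  isg_one_l : forall a, isg_mul isg_one a = a;
  isg_one_r : forall a, isg_mul a isg_one = a;
  isg_star_1 : forall s, isg_mul (isg_mul s (isg_star s)) s = s;
  isg_star_2 : forall s, isg_mul (isg_mul (isg_star s) s) (isg_star s) = isg_star s;
  isg_star_uniq : forall s t, isg_mul (isg_mul s t) s = s ->
                  isg_mul (isg_mul t s) t = t -> t = isg_star s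
}.

Definition countable (T : Type) : Prop :=
  exists f : T -> nat, forall a b, f a = f b -> a = b.

Definition set (X : Type) := X -> Prop.
Definition set0 {X} : set X := fun _ => False.
Definition subset {X} (A B : set X) := forall x, A x -> B x.
Definition seteq {X} (A B : set X) := forall x, A x <-> B x.
Definition disjoint {X} (A B : set X) := forall x, A x -> B x -> False.
Definition setU {X} (A B : set X) : set X := fun x => A x \/ B x.
Definition bigunion {X} (l : list (set X)) : set X :=
  fun x => exists B, In B l /\ B x.
Definition pairwise_disjoint {X} (l : list (set X)) : Prop :=
  forall i j, i < length l -> j < length l -> i <> j ->
    disjoint (nth i l set0) (nth j l set0).

(** A representation S -> I(X): alpha_s is the partial bijection with
    domain [rdom s] and map [ract s] (injective on its domain);
    it is a unital semigroup homomorphism for composition of partial maps. *)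
Record Rep (S : InvSemigroup) (X : Type) := {
  rdom : S -> set X;
  ract : S -> X -> X;
  ract_inj : forall s x y, rdom s x -> rdom s y -> ract s x = ract s y -> x = y;
  rdom_one : forall x, rdom (isg_one S) x;
  ract_one : forall x, ract (isg_one S) x = x;
  rdom_mul : forall s t x,
    rdom (isg_mul S s t) x <-> (rdom t x /\ rdom s (ract t x));
  ract_mul : forall s t x, rdom (isg_mul S s t) x ->
    ract (isg_mul S s t) x = ract s (ract t x)
}.

Section TypeSemigroup.
Variables (S : InvSemigroup) (X : Type) (alpha : Rep S X).

Definition Dom (s : S) : set X := rdom alpha (isg_mul S (isg_star S s) s).
Definition img (s : S) (A : set X) : set X :=
  fun y => exists x, A x /\ y = ract alpha s x.

(** Typ(alpha): the free commutative monoid on symbols [A] (formal sums =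
    lists of subsets, + = concatenation, 0 = nil) modulo the smallest
    congruence [teq] containing the defining relations. *)
Inductive teq : list (set X) -> list (set X) -> Prop :=
| teq_refl l : teq l l
| teq_sym l m : teq l m -> teq m l
| teq_trans l m n : teq l m -> teq m n -> teq l n
| teq_comm l m : teq (l ++ m) (m ++ l)
| teq_addr l m k : teq l m -> teq (l ++ k) (m ++ k)
| teq_ext A B : seteq A B -> teq [A] [B]
| teq_empty : teq [set0] []
| teq_act s A : subset A (Dom s) -> teq [A] [img s A]
| teq_union A B : disjoint A B -> teq [setU A B] [A; B].

Definition Typ := list (set X).
Definition tcls (A : set X) : Typ := [A].
Definition tadd (x y : Typ) : Typ := x ++ y.
Fixpoint tmul (n : nat) (x : Typ) : Typ :=
  match n with O => [] | Datatypes.S k => tadd x (tmul k x) end.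
Definition tle (x y : Typ) : Prop := exists z, teq (tadd x z) y.

Definition paradoxical (A : set X) : Prop :=
  exists (As Bs : list (set X * S)),
    (forall p, In p As -> subset (fst p) (Dom (snd p))) /\
    (forall p, In p Bs -> subset (fst p) (Dom (snd p))) /\
    pairwise_disjoint (map (fun p => img (snd p) (fst p)) As) /\
    seteq A (bigunion (map (fun p => img (snd p) (fst p)) As)) /\
    pairwise_disjoint (map (fun p => img (snd p) (fst p)) Bs) /\
    seteq A (bigunion (map (fun p => img (snd p) (fst p)) Bs)) /\
    pairwise_disjoint (map fst As ++ map fst Bs) /\
    subset (bigunion (map fst As ++ map fst Bs)) A.

End TypeSemigroup.

(* Main.v *)
Require Import Defs.
From Stdlib Require Import List Arith Lia Permutation Classical ClassicalEpsilon ProofIrrelevance Relations FunctionalExtensionality PropExtensionality.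
Import ListNotations.
Set Implicit Arguments.

Section Basics.
Variables (Sg : InvSemigroup) (X : Type) (alpha : Rep Sg X).
Notation mul := (isg_mul Sg).
Notation star := (isg_star Sg).
Notation one := (isg_one Sg).
Notation rd := (rdom alpha).
Notation ra := (ract alpha).
Notation teq := (teq alpha).

Lemma rdom_star s x : rd s x -> rd (star s) (ra s x) /\ ra (star s) (ra s x) = x.
Proof.
  intro H.
  assert (E := isg_star_1 Sg s).
  assert (H1 : rd (mul (mul s (star s)) s) x) by (rewrite E; exact H).
  apply (rdom_mul alpha) in H1 as [_ H2].
  assert (H2' := H2). apply (rdom_mul alpha) in H2' as [H3 H4].
  split; [exact H3|].
  assert (E2 : ra (mul (mul s (star s)) s) x = ra s x) by (rewrite E; reflexivity).
  rewrite (ract_mul alpha) in E2 by (apply (rdom_mul alpha); auto).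
  rewrite (ract_mul alpha) in E2 by exact H2.
  eapply (ract_inj alpha); eauto.
Qed.

Lemma Dom_iff s x : Dom alpha s x <-> rd s x.
Proof.
  unfold Dom. rewrite (rdom_mul alpha). split; [tauto|].
  intro H; split; [exact H | apply (rdom_star s x H)].
Qed.

Lemma teq_app l l' m m' : teq l l' -> teq m m' -> teq (l ++ m) (l' ++ m').
Proof.
  intros H1 H2. apply teq_trans with (l' ++ m).
  - apply teq_addr; auto.
  - apply teq_trans with (m ++ l'); [apply teq_comm|].
    apply teq_trans with (m' ++ l'); [apply teq_addr; auto| apply teq_comm].
Qed.

Lemma teq_cons a b l m : teq [a] [b] -> teq l m -> teq (a :: l) (b :: m).
Proof. intros; apply (teq_app H H0). Qed.

Lemma teq_perm l m : Permutation l m -> teq l m.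
Proof.
  induction 1.
  - apply teq_refl.
  - apply teq_cons; auto; apply teq_refl.
  - apply (teq_app (l:=[y;x]) (l':=[x;y])). apply (teq_comm _ [y] [x]). apply teq_refl.
  - eapply teq_trans; eauto.
Qed.

Lemma teq_nil_empty A : (forall a, ~ A a) -> teq [A] [].
Proof.
  intro H. apply teq_trans with [set0].
  - apply teq_ext. intro a. unfold set0. split; [apply H| tauto].
  - apply teq_empty.
Qed.

Lemma teq_map2 (F G : nat -> set X) ks :
  (forall k, In k ks -> teq [F k] [G k]) -> teq (map F ks) (map G ks).
Proof.
  induction ks; simpl; intros; [apply teq_refl|].
  apply teq_cons; auto.
Qed.

Lemma teq_map_ext (F G : nat -> set X) ks :
  (forall k, In k ks -> seteq (F k) (G k)) -> teq (map F ks) (map G ks).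
Proof. intros; apply teq_map2; intros; apply teq_ext; auto. Qed.

Lemma teq_all_empty (F : nat -> set X) ks :
  (forall k a, In k ks -> ~ F k a) -> teq [] (map F ks).
Proof.
  induction ks; simpl; intros; [apply teq_refl|].
  apply teq_sym. apply (teq_app (l:=[F a]) (l':=[]) (m:=map F ks) (m':=[])).
  - apply teq_nil_empty; eauto.
  - apply teq_sym; auto.
Qed.

Lemma teq_split A (C : X -> Prop) :
  teq [A] [fun a => A a /\ C a; fun a => A a /\ ~ C a].
Proof.
  apply teq_trans with [setU (fun a => A a /\ C a) (fun a => A a /\ ~ C a)].
  - apply teq_ext. intro a; unfold setU. destruct (classic (C a)); tauto.
  - apply teq_union. intros a [] []; tauto.
Qed.

Lemma part1 (f : X -> nat) ks : NoDup ks -> forall A,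
  (forall a, A a -> In (f a) ks) -> teq [A] (map (fun k a => A a /\ f a = k) ks).
Proof.
  induction 1 as [|k ks Hk Hnd IH]; intros A HA; simpl.
  - apply teq_nil_empty. intros a Ha. exact (HA a Ha).
  - eapply teq_trans; [apply (teq_split A (fun a => f a = k))|].
    apply (teq_cons (l:=[fun a => A a /\ ~ f a = k])).
    + apply teq_ext; intro; tauto.
    + eapply teq_trans; [apply (IH (fun a => A a /\ ~ f a = k))|].
      * intros a [Ha Hn]. destruct (HA a Ha); [congruence|auto].
      * apply teq_map_ext. intros k' Hk' a. split; [tauto|].
        intros [Ha Hf]. repeat split; auto. intro E; subst. congruence.
Qed.

Definition bigU (L : list (set X)) : set X := fun x => exists B, In B L /\ B x.

Lemma teq_dunion L : forall A, pairwise_disjoint L -> seteq A (bigunion L) -> teq [A] L.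
Proof.
  induction L as [|B L IH]; intros A Hd Hs.
  - apply teq_nil_empty. intros a Ha. apply Hs in Ha as [B' [[] _]].
  - apply teq_trans with [setU B (bigunion L)].
    + apply teq_ext. intro a. rewrite (Hs a). unfold bigunion, setU. simpl.
      split.
      * intros [B' [[<-|HB] Hx]]; [left; auto| right; eauto].
      * intros [H|[B' [HB Hx]]]; eauto.
    + eapply teq_trans; [apply teq_union|].
      * intros a HB [B' [HB' Ha]]. apply In_nth with (d := set0) in HB' as [j [Hj Ej]].
        refine (Hd 0 (S j) _ _ _ a _ _); simpl; try lia. exact HB. rewrite Ej; exact Ha.
      * apply teq_cons; [apply teq_refl|]. apply IH; [|intro; reflexivity].
        intros i j Hi Hj Hij. apply (Hd (S i) (S j)); simpl; lia.
Qed.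

End Basics.

Section Moves.
Variables (Sg : InvSemigroup) (X : Type) (alpha : Rep Sg X).
Notation mul := (isg_mul Sg).
Notation star := (isg_star Sg).
Notation one := (isg_one Sg).
Notation rd := (rdom alpha).
Notation ra := (ract alpha).

Definition pt := (nat * X)%type.
Definition move := (Sg * nat * nat)%type.
Definition mok (m : move) (p : pt) := fst p = snd (fst m) /\ rd (fst (fst m)) (snd p).
Definition mapp (m : move) (p : pt) : pt := (snd m, ra (fst (fst m)) (snd p)).
Definition pw (P : pt -> Prop) (h : pt -> pt) :=
  exists ms : list move, forall p, P p -> exists m, In m ms /\ mok m p /\ h p = mapp m p.
Definition LS (l : list (set X)) (p : pt) : Prop := nth (fst p) l set0 (snd p).
Definition Inj (P Q : pt -> Prop) h :=
  pw P h /\ (forall p, P p -> Q (h p)) /\ (forall p q, P p -> P q -> h p = h q -> p = q).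
Definition Bij (P Q : pt -> Prop) h := Inj P Q h /\ (forall q, Q q -> exists p, P p /\ h p = q).
Definition equi l m := exists h, Bij (LS l) (LS m) h.

Definition mcomp (m2 m1 : move) : move := ((mul (fst (fst m2)) (fst (fst m1)), snd (fst m1)), snd m2).
Definition minv (m : move) : move := ((star (fst (fst m)), snd m), snd (fst m)).

Lemma mcomp_ok m1 m2 p : mok m1 p -> mok m2 (mapp m1 p) ->
  mok (mcomp m2 m1) p /\ mapp (mcomp m2 m1) p = mapp m2 (mapp m1 p).
Proof.
  destruct m1 as [[s1 i1] j1], m2 as [[s2 i2] j2], p as [i a].
  unfold mok, mapp, mcomp; simpl. intros [E1 H1] [E2 H2].
  assert (H : rd (mul s2 s1) a) by (apply (rdom_mul alpha); auto).
  split; [auto|]. rewrite (ract_mul alpha) by exact H. reflexivity.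
Qed.

Lemma rdom_star' s x : rd s x -> rd (star s) (ra s x) /\ ra (star s) (ra s x) = x.
Proof.
  intro H.
  assert (E := isg_star_1 Sg s).
  assert (H1 : rd (mul (mul s (star s)) s) x) by (rewrite E; exact H).
  apply (rdom_mul alpha) in H1 as [_ H2].
  assert (H2' := H2). apply (rdom_mul alpha) in H2' as [H3 H4].
  split; [exact H3|].
  assert (E2 : ra (mul (mul s (star s)) s) x = ra s x) by (rewrite E; reflexivity).
  rewrite (ract_mul alpha) in E2 by (apply (rdom_mul alpha); auto).
  rewrite (ract_mul alpha) in E2 by exact H2.
  eapply (ract_inj alpha); eauto.
Qed.

Lemma minv_ok m p : mok m p -> mok (minv m) (mapp m p) /\ mapp (minv m) (mapp m p) = p.
Proof.
  destruct m as [[s i] j], p as [i' a]. unfold mok, mapp, minv; simpl. intros [E H].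
  destruct (rdom_star' s a H) as [H1 H2]. split; auto. rewrite H2, E; reflexivity.
Qed.

Lemma pw_sub P Q h : (forall p, Q p -> P p) -> pw P h -> pw Q h.
Proof. intros HQ [ms Hms]; exists ms; auto. Qed.

Lemma pw_ext P h h' : (forall p, P p -> h p = h' p) -> pw P h -> pw P h'.
Proof.
  intros He [ms Hms]; exists ms. intros p Hp. destruct (Hms p Hp) as [m [? [? ?]]].
  exists m; rewrite <- He; auto.
Qed.

Lemma pw_comp P Q h1 h2 : pw P h1 -> (forall p, P p -> Q (h1 p)) -> pw Q h2 ->
  pw P (fun p => h2 (h1 p)).
Proof.
  intros [ms1 H1] HPQ [ms2 H2].
  exists (flat_map (fun m1 => map (fun m2 => mcomp m2 m1) ms2) ms1).
  intros p Hp. destruct (H1 p Hp) as [m1 [I1 [O1 E1]]].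
  destruct (H2 (h1 p) (HPQ p Hp)) as [m2 [I2 [O2 E2]]].
  rewrite E1 in O2. destruct (mcomp_ok O1 O2) as [O E].
  exists (mcomp m2 m1). split; [|split; auto].
  - apply in_flat_map. exists m1; split; auto. apply (in_map (fun m2 => mcomp m2 m1)); auto.
  - rewrite E2, E1, E; reflexivity.
Qed.

Definition inv_on (P : pt -> Prop) (h : pt -> pt) (q : pt) : pt :=
  match excluded_middle_informative (exists p, P p /\ h p = q) with
  | left H => proj1_sig (constructive_indefinite_description _ H)
  | right _ => q end.

Lemma inv_on_spec P h q : (exists p, P p /\ h p = q) -> P (inv_on P h q) /\ h (inv_on P h q) = q.
Proof.
  intro H. unfold inv_on. destruct (excluded_middle_informative _); [|contradiction].
  apply proj2_sig.
Qed.

Lemma inv_on_h P h p : (forall p q, P p -> P q -> h p = h q -> p = q) -> P p -> inv_on P h (h p) = p.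
Proof.
  intros Hi Hp. destruct (@inv_on_spec P h (h p)) as [H1 H2]; eauto.
Qed.

Lemma pw_inv P h : pw P h -> (forall p q, P p -> P q -> h p = h q -> p = q) ->
  pw (fun q => exists p, P p /\ h p = q) (inv_on P h).
Proof.
  intros [ms Hms] Hi. exists (map minv ms). intros q [p [Hp <-]].
  destruct (Hms p Hp) as [m [Im [Om Em]]]. exists (minv m).
  destruct (minv_ok Om) as [O E]. rewrite Em in *. split; [apply in_map; auto| split; auto].
  rewrite E, <- Em. apply inv_on_h; auto.
Qed.

Lemma pw_if P (C : pt -> Prop) h1 h2 : pw (fun p => P p /\ C p) h1 -> pw (fun p => P p /\ ~ C p) h2 ->
  pw P (fun p => if excluded_middle_informative (C p) then h1 p else h2 p).
Proof.
  intros [ms1 H1] [ms2 H2]. exists (ms1 ++ ms2). intros p Hp.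
  destruct (excluded_middle_informative (C p)) as [c|c].
  - destruct (H1 p (conj Hp c)) as [m [? ?]]. exists m; split; auto. apply in_or_app; auto.
  - destruct (H2 p (conj Hp c)) as [m [? ?]]. exists m; split; auto. apply in_or_app; auto.
Qed.

Lemma pw_reindex P (g : pt -> nat) N M : (forall p, P p -> fst p < N /\ g p < M) ->
  pw P (fun p => (g p, snd p)).
Proof.
  intros HB. exists (flat_map (fun i => map (fun j => ((one, i), j)) (seq 0 M)) (seq 0 N)).
  intros [i a] Hp. destruct (HB _ Hp) as [Hi Hj]; simpl in *.
  exists ((one, i), g (i,a)). split; [|split].
  - apply in_flat_map. exists i. split; [apply in_seq; lia|]. apply in_map, in_seq; lia.
  - split; [reflexivity|]. apply (rdom_one alpha).
  - unfold mapp; simpl. rewrite (ract_one alpha). reflexivity.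
Qed.

Lemma pw_single P s : (forall p, P p -> fst p = 0 /\ rd s (snd p)) ->
  pw P (fun p => (0, ra s (snd p))).
Proof.
  intros H. exists [((s,0),0)]. intros p Hp. exists ((s,0),0). simpl.
  split; auto. split; [apply H; auto| reflexivity].
Qed.

Lemma LS_bound l p : LS l p -> fst p < length l.
Proof.
  unfold LS. destruct (Nat.lt_ge_cases (fst p) (length l)) as [H|H]; auto.
  rewrite nth_overflow by exact H. intros [].
Qed.

Lemma LS_app l k i a : LS (l ++ k) (i,a) <->
  (i < length l /\ LS l (i,a)) \/ (length l <= i /\ LS k (i - length l, a)).
Proof.
  unfold LS; simpl. destruct (Nat.lt_ge_cases i (length l)) as [H|H].
  - rewrite app_nth1 by auto. split; [auto| intros [[]|[]]; auto; lia].
  - rewrite app_nth2 by auto. split; [auto| intros [[]|[]]; auto; lia].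
Qed.

Lemma Bij_comp P Q R h1 h2 : Bij P Q h1 -> Bij Q R h2 -> Bij P R (fun p => h2 (h1 p)).
Proof.
  intros [[pw1 [m1 i1]] s1] [[pw2 [m2 i2]] s2].
  split; [split; [|split]|].
  - eapply pw_comp; eauto.
  - auto.
  - intros p q Hp Hq E. apply i1; auto.
  - intros r Hr. destruct (s2 r Hr) as [q [Hq <-]]. destruct (s1 q Hq) as [p [Hp <-]]. eauto.
Qed.

Lemma Bij_inv P Q h : Bij P Q h -> Bij Q P (inv_on P h).
Proof.
  intros [[pw1 [m1 i1]] s1].
  assert (Hs : forall q, Q q -> P (inv_on P h q) /\ h (inv_on P h q) = q)
    by (intros; apply inv_on_spec; auto).
  split; [split; [|split]|].
  - eapply pw_sub; [|apply pw_inv; eauto]. simpl; auto.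
  - intros q Hq; apply Hs; auto.
  - intros p q Hp Hq E. rewrite <- (proj2 (Hs p Hp)), <- (proj2 (Hs q Hq)), E. reflexivity.
  - intros p Hp. exists (h p). split; auto. apply inv_on_h; auto.
Qed.

Lemma Bij_ext P Q R h : (forall p, Q p <-> R p) -> Bij P Q h -> Bij P R h.
Proof.
  intros HQ [[pw1 [m1 i1]] s1]. split; [split; [|split]|]; auto.
  - intros p Hp; apply HQ; auto.
  - intros q Hq. apply s1, HQ; auto.
Qed.

Lemma Bij_ext_l P Q R h : (forall p, Q p <-> R p) -> Bij Q P h -> Bij R P h.
Proof.
  intros HQ [[pw1 [m1 i1]] s1]. split; [split; [|split]|]; auto.
  - eapply pw_sub; [|exact pw1]. intros p Hp; apply HQ; auto.
  - intros p Hp; apply m1, HQ; auto.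
  - intros p q Hp Hq; apply i1; apply HQ; auto.
  - intros q Hq. destruct (s1 q Hq) as [p [? ?]]. exists p; split; auto; apply HQ; auto.
Qed.

End Moves.

Section ThA.
Variables (Sg : InvSemigroup) (X : Type) (alpha : Rep Sg X).
Notation rd := (rdom alpha).
Notation ra := (ract alpha).
Notation LS := (@LS X).
Notation Bij := (Bij alpha).
Notation pw := (pw alpha).

Lemma Bij_id P Q N : (forall p, P p <-> Q p) -> (forall p, P p -> fst p < N) -> Bij P Q (fun p => p).
Proof.
  intros HPQ HN. split; [split; [|split]|].
  - eapply pw_ext; [|apply (pw_reindex alpha P (fun p => fst p) (N:=N) (M:=N))].
    + intros [i a] _; reflexivity.
    + intros p Hp; split; apply HN; auto.
  - intros; apply HPQ; auto.
  - auto.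
  - intros q Hq; exists q; split; auto; apply HPQ; auto.
Qed.

Lemma LS_single A i a : LS [A] (i,a) <-> i = 0 /\ A a.
Proof. unfold LS; destruct i as [|[|i]]; simpl; unfold set0; split; intros H; try tauto; try (destruct H; discriminate); try (destruct i; contradiction). Qed.

Lemma LS_two A B i a : LS [A;B] (i,a) <-> (i = 0 /\ A a) \/ (i = 1 /\ B a).
Proof.
  unfold LS; destruct i as [|[|i]]; simpl.
  - split; [auto| intros [[]|[]]; auto; discriminate].
  - split; [auto| intros [[]|[]]; auto; discriminate].
  - split; [destruct i; intros []| intros [[]|[]]; discriminate].
Qed.

Lemma teq_equi l m : teq alpha l m -> equi alpha l m.
Proof.
  induction 1.
  - exists (fun p => p). apply Bij_id with (N := length l); [tauto| apply LS_bound].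
  - destruct IHteq as [h Hh]. exists (inv_on (LS l) h). apply Bij_inv; auto.
  - destruct IHteq1 as [h1 H1], IHteq2 as [h2 H2]. eexists. eapply Bij_comp; eauto.
  - set (g := fun p : pt X => if Nat.ltb (fst p) (length l) then fst p + length m else fst p - length l).
    exists (fun p => (g p, snd p)). split; [split; [|split]|].
    + apply pw_reindex with (N := length l + length m) (M := length l + length m).
      intros [i a] Hp. apply LS_bound in Hp. rewrite length_app in Hp. simpl in *.
      unfold g; simpl. destruct (Nat.ltb_spec i (length l)); lia.
    + intros [i a] Hp. unfold g; simpl. apply LS_app in Hp.
      destruct (Nat.ltb_spec i (length l)); apply LS_app.
      * right. split; [lia|]. replace (i + length m - length m) with i by lia. destruct Hp as [[]|[]]; auto; lia.
      * left. destruct Hp as [[]|[]]; [lia|]. split; auto. apply LS_bound in H1. simpl in H1; lia.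
    + intros [i a] [j b] Hp Hq E. injection E; intros E1 E2. subst b.
      apply LS_bound in Hp, Hq. rewrite length_app in *. simpl in *.
      unfold g in E2; simpl in E2.
      destruct (Nat.ltb_spec i (length l)), (Nat.ltb_spec j (length l)); f_equal; lia.
    + intros [j b] Hq. apply LS_app in Hq. destruct Hq as [[Hj Hq]|[Hj Hq]].
      * exists (j + length l, b). unfold g; simpl. destruct (Nat.ltb_spec (j + length l) (length l)); [lia|].
        split; [apply LS_app; right; split; [lia|]; replace (j + length l - length l) with j by lia; auto|].
        f_equal; lia.
      * exists (j - length m, b). unfold g; simpl. destruct (Nat.ltb_spec (j - length m) (length l)).
        -- split; [apply LS_app; left; split; auto|]. f_equal; lia.
        -- apply LS_bound in Hq; simpl in Hq; lia.
  - destruct IHteq as [h [[Hpw [Hm Hi]] Hs]].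
    set (g := fun p : pt X => (fst p - length l + length m, snd p)).
    exists (fun p => if excluded_middle_informative (fst p < length l) then h p else g p).
    assert (HL : forall i a, i < length l -> LS (l ++ k) (i,a) <-> LS l (i,a)).
    { intros i a Hi'. rewrite LS_app. split; [intros [[]|[]]; auto; lia| auto]. }
    assert (HK : forall i a, length l <= i -> LS (l ++ k) (i,a) <-> LS k (i - length l,a)).
    { intros i a Hi'. rewrite LS_app. split; [intros [[]|[]]; auto; lia| auto]. }
    assert (HM : forall i a, i < length m -> LS (m ++ k) (i,a) <-> LS m (i,a)).
    { intros i a Hi'. rewrite LS_app. split; [intros [[]|[]]; auto; lia| auto]. }
    assert (HK' : forall i a, length m <= i -> LS (m ++ k) (i,a) <-> LS k (i - length m,a)).
    { intros i a Hi'. rewrite LS_app. split; [intros [[]|[]]; auto; lia| auto]. }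
    split; [split; [|split]|].
    + apply pw_if.
      * eapply pw_sub; [|exact Hpw]. intros [i a] [Hp Hc]; simpl in Hc. apply HL; auto.
      * apply pw_reindex with (N := length (l ++ k)) (M := length (m ++ k)).
        intros [i a] [Hp Hc]. simpl in Hc |- *. assert (Hb := LS_bound _ _ Hp). split; auto.
        rewrite length_app in *. apply HK in Hp; [|lia]. apply LS_bound in Hp. simpl in Hp. lia.
    + intros [i a] Hp. simpl. destruct (excluded_middle_informative (i < length l)).
      * assert (Hl : LS l (i,a)) by (apply HL; auto). specialize (Hm _ Hl).
        destruct (h (i,a)) as [j b] eqn:E. apply HM; auto. apply LS_bound in Hm; auto.
      * unfold g; simpl. apply HK'; [lia|]. replace (i - length l + length m - length m) with (i - length l) by lia.
        apply HK; auto; lia.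
    + intros [i a] [j b] Hp Hq. simpl.
      destruct (excluded_middle_informative (i < length l)), (excluded_middle_informative (j < length l)).
      * apply Hi; [apply HL| apply HL]; auto.
      * intros E. assert (Hl : LS l (i,a)) by (apply HL; auto). specialize (Hm _ Hl). apply LS_bound in Hm.
        rewrite E in Hm. unfold g in Hm; simpl in Hm. lia.
      * intros E. assert (Hl : LS l (j,b)) by (apply HL; auto). specialize (Hm _ Hl). apply LS_bound in Hm.
        rewrite <- E in Hm. unfold g in Hm; simpl in Hm. lia.
      * unfold g; simpl. intro E. injection E; intros; subst. f_equal; lia.
    + intros [j b] Hq. destruct (Nat.lt_ge_cases j (length m)).
      * apply HM in Hq; auto. destruct (Hs _ Hq) as [[i a] [Hp E]].
        exists (i,a). assert (Hb := LS_bound _ _ Hp). simpl in Hb. split; [apply HL; auto|].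
        simpl. destruct (excluded_middle_informative (i < length l)); [auto| lia].
      * apply HK' in Hq; auto. exists (j - length m + length l, b). split.
        -- apply HK; [lia|]. replace (j - length m + length l - length l) with (j - length m) by lia. auto.
        -- simpl. destruct (excluded_middle_informative (j - length m + length l < length l)); [lia|].
           unfold g; simpl. f_equal; lia.
  - exists (fun p => p). apply Bij_id with (N:=1).
    + intros [i a]. rewrite !LS_single. specialize (H a). tauto.
    + intros [i a] Hp. apply LS_single in Hp. simpl; lia.
  - exists (fun p => p). apply Bij_id with (N:=1).
    + intros [i a]. rewrite LS_single. unfold LS, set0. destruct i; simpl; tauto.
    + intros [i a] Hp. apply LS_single in Hp. simpl; lia.
  - exists (fun p => (0, ra s (snd p))). split; [split; [|split]|].
    + apply pw_single. intros [i a] Hp. apply LS_single in Hp as [-> Ha]. split; auto.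
      apply (Dom_iff alpha), H; auto.
    + intros [i a] Hp. apply LS_single in Hp as [-> Ha]. apply LS_single. split; auto. exists a; auto.
    + intros [i a] [j b] Hp Hq E. apply LS_single in Hp as [-> Ha], Hq as [-> Hb].
      injection E; intro E'. f_equal. eapply (ract_inj alpha); [| |exact E'].
      * apply (Dom_iff alpha), H; auto.
      * apply (Dom_iff alpha), H; auto.
    + intros [j b] Hq. apply LS_single in Hq as [-> [a [Ha ->]]]. exists (0,a). split; auto.
  - exists (fun p => (if excluded_middle_informative (A (snd p)) then 0 else 1, snd p)).
    split; [split; [|split]|].
    + apply pw_reindex with (N:=1) (M:=2). intros [i a] Hp. apply LS_single in Hp as [-> _]. simpl.
      destruct (excluded_middle_informative (A a)); lia.
    + intros [i a] Hp. apply LS_single in Hp as [-> Ha]. simpl. apply LS_two.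
      destruct (excluded_middle_informative (A a)); [left; auto| right]. destruct Ha; tauto.
    + intros [i a] [j b] Hp Hq E. apply LS_single in Hp as [-> Ha], Hq as [-> Hb].
      injection E; intros; subst; auto.
    + intros [j b] Hq. exists (0,b). apply LS_two in Hq. split.
      * apply LS_single. split; auto. unfold setU; tauto.
      * simpl. destruct (excluded_middle_informative (A b)); destruct Hq as [[-> ?]|[-> ?]]; auto.
        -- exfalso; eapply H; eauto.
        -- tauto.
Qed.
End ThA.

Lemma perm_filter_split A (f : A -> bool) l :
  Permutation l (filter f l ++ filter (fun x => negb (f x)) l).
Proof.
  induction l; simpl; auto. destruct (f a); simpl.
  - constructor; auto.
  - apply Permutation_cons_app; auto.
Qed.

Section ThB.
Variables (Sg : InvSemigroup) (X : Type) (alpha : Rep Sg X).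
Notation rd := (rdom alpha).
Notation ra := (ract alpha).
Notation LS := (@LS X).
Notation teq := (teq alpha).

Lemma rows l : forall ks (c : pt X -> nat) (src : nat -> nat), NoDup ks ->
  (forall p, LS l p -> In (c p) ks /\ fst p = src (c p)) ->
  teq l (map (fun k a => LS l (src k, a) /\ c (src k, a) = k) ks).
Proof.
  induction l as [|A l IH]; intros ks c src Hnd Hc.
  - apply teq_all_empty. intros k a _ [H _]. unfold LS in H; simpl in H. destruct (src k); exact H.
  - set (F := fun k a => LS (A :: l) (src k, a) /\ c (src k, a) = k).
    set (z := fun k => Nat.eqb (src k) 0).
    apply teq_trans with (map F (filter z ks ++ filter (fun x => negb (z x)) ks)).
    2:{ apply teq_perm. apply Permutation_map. apply Permutation_sym, perm_filter_split. }
    rewrite map_app. apply (teq_app (l := [A]) (m := l)).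
    + eapply teq_trans; [apply (part1 alpha (fun a => c (0,a)) (ks := filter z ks))|].
      * apply NoDup_filter; auto.
      * intros a Ha. destruct (Hc (0,a)) as [H1 H2]; [exact Ha|]. apply filter_In. split; auto.
        unfold z. rewrite <- H2. reflexivity.
      * apply teq_map_ext. intros k Hk a. apply filter_In in Hk as [_ Hk]. unfold z in Hk.
        apply Nat.eqb_eq in Hk. unfold F. rewrite Hk. unfold LS; simpl. tauto.
    + eapply teq_trans; [apply (IH (filter (fun x => negb (z x)) ks) (fun p => c (S (fst p), snd p)) (fun k => pred (src k)))|].
      * apply NoDup_filter; auto.
      * intros [i a] Hp. destruct (Hc (S i, a)) as [H1 H2]; [exact Hp|]. simpl in *.
        split; [|rewrite <- H2; reflexivity]. apply filter_In. split; auto. unfold z. rewrite <- H2. reflexivity.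
      * apply teq_map_ext. intros k Hk a. apply filter_In in Hk as [_ Hk]. unfold z in Hk.
        unfold F. simpl. destruct (src k) as [|j]; [discriminate|]. unfold LS; simpl. tauto.
Qed.

Lemma pw_col P h : pw alpha P h -> exists ms : list (move Sg), exists c : pt X -> nat,
  forall p, P p -> c p < length ms /\ mok alpha (nth (c p) ms ((isg_one Sg, 0), 0)) p /\
     h p = mapp alpha (nth (c p) ms ((isg_one Sg, 0), 0)) p.
Proof.
  intros [ms Hms]. set (d := ((isg_one Sg, 0), 0) : move Sg).
  set (Q := fun p k => k < length ms /\ mok alpha (nth k ms d) p /\ h p = mapp alpha (nth k ms d) p).
  exists ms, (fun p => match excluded_middle_informative (exists k, Q p k) with
    | left H => proj1_sig (constructive_indefinite_description _ H) | right _ => 0 end).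
  intros p Hp. destruct (excluded_middle_informative (exists k, Q p k)) as [H|H].
  - exact (proj2_sig (constructive_indefinite_description _ H)).
  - exfalso; apply H. destruct (Hms p Hp) as [m [Im [Om Em]]].
    apply In_nth with (d := d) in Im as [k [Hk Ek]]. exists k. unfold Q; rewrite Ek; auto.
Qed.

Lemma equi_teq l m : equi alpha l m -> teq l m.
Proof.
  intros [h [[Hpw [Hm Hi]] Hs]].
  destruct (pw_col Hpw) as [ms [c Hc]].
  set (d := ((isg_one Sg, 0), 0) : move Sg).
  set (K := length ms). set (ks := seq 0 K).
  set (src := fun k => snd (fst (nth k ms d))).
  set (tgt := fun k => snd (nth k ms d)).
  set (sk := fun k => fst (fst (nth k ms d))).
  set (g := inv_on (LS l) h).
  assert (Hnd : NoDup ks) by apply seq_NoDup.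
  eapply teq_trans; [apply (rows l c src Hnd)|].
  { intros p Hp. destruct (Hc p Hp) as [H1 [[H2 _] _]]. split; [apply in_seq; unfold K; lia| exact H2]. }
  apply teq_sym.
  eapply teq_trans; [apply (rows m (fun q => c (g q)) tgt Hnd)|].
  { intros q Hq. destruct (Hs q Hq) as [p [Hp <-]]. unfold g. rewrite inv_on_h by auto.
    destruct (Hc p Hp) as [H1 [_ H3]]. split; [apply in_seq; unfold K; lia|]. rewrite H3. reflexivity. }
  apply teq_sym. apply teq_map2. intros k Hk.
  set (Pl := fun a => LS l (src k, a) /\ c (src k, a) = k).
  apply teq_trans with [img alpha (sk k) Pl].
  - apply teq_act. intros a [Ha Hca]. apply (Dom_iff alpha).
    destruct (Hc _ Ha) as [_ [[_ H] _]]. rewrite Hca in H. exact H.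
  - apply teq_ext. intro b. split.
    + intros [a [[Ha Hca] ->]]. destruct (Hc _ Ha) as [_ [_ E]]. rewrite Hca in E.
      assert (E' : h (src k, a) = (tgt k, ra (sk k) a)) by (rewrite E; reflexivity).
      rewrite <- E'. split; [apply Hm; auto|]. unfold g; rewrite inv_on_h by auto. exact Hca.
    + intros [Hb Hcb]. destruct (Hs _ Hb) as [[i a] [Hp E]]. unfold g in Hcb. rewrite <- E in Hcb.
      rewrite inv_on_h in Hcb by auto. destruct (Hc _ Hp) as [_ [[Hsrc _] E2]].
      rewrite Hcb in Hsrc, E2. simpl in Hsrc. subst i. exists a. split; [split; auto|].
      rewrite E2 in E. unfold mapp in E. injection E; intros; auto.
Qed.

Lemma teq_iff_equi l m : teq l m <-> equi alpha l m.
Proof. split; [apply teq_equi| apply equi_teq]. Qed.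

End ThB.

Section SBsec.
Variables (Sg : InvSemigroup) (X : Type) (alpha : Rep Sg X).
Notation rd := (rdom alpha).
Notation ra := (ract alpha).
Notation LS := (@LS X).
Notation teq := (teq alpha).
Notation Inj := (Inj alpha).
Notation Bij := (Bij alpha).

Section SBinner.
Variables (P Q : pt X -> Prop) (f g : pt X -> pt X).
Hypothesis (Hf : Inj P Q f) (Hg : Inj Q P g).

Inductive Ch : pt X -> Prop :=
| Ch0 p : P p -> ~ (exists q, Q q /\ g q = p) -> Ch p
| Ch1 p : Ch p -> Ch (g (f p)).

Lemma Ch_P p : Ch p -> P p.
Proof.
  destruct Hf as [_ [mf _]], Hg as [_ [mg _]].
  induction 1; auto.
Qed.

Lemma SB_main : exists h, Bij P Q h.
Proof.
  destruct Hf as [pf [mf jf]], Hg as [pg [mg jg]].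
  exists (fun p => if excluded_middle_informative (Ch p) then f p else inv_on Q g p).
  assert (HnC : forall p, P p -> ~ Ch p -> exists q, Q q /\ g q = p).
  { intros p Hp Hn. apply NNPP. intro H. apply Hn. apply Ch0; auto. }
  assert (Hinv : forall p, P p -> ~ Ch p -> Q (inv_on Q g p) /\ g (inv_on Q g p) = p).
  { intros p Hp Hn. apply inv_on_spec; auto. }
  split; [split; [|split]|].
  - apply pw_if.
    + eapply pw_sub; [|exact pf]. intros p []; auto.
    + eapply pw_sub; [|apply pw_inv; eauto]. intros p [Hp Hn]. apply HnC; auto.
  - intros p Hp. destruct (excluded_middle_informative (Ch p)); auto. apply Hinv; auto.
  - intros p q Hp Hq.
    destruct (excluded_middle_informative (Ch p)) as [cp|cp], (excluded_middle_informative (Ch q)) as [cq|cq].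
    + apply jf; auto.
    + intro E. exfalso. apply cq. rewrite <- (proj2 (Hinv q Hq cq)), <- E. apply Ch1; auto.
    + intro E. exfalso. apply cp. rewrite <- (proj2 (Hinv p Hp cp)), E. apply Ch1; auto.
    + intro E. rewrite <- (proj2 (Hinv p Hp cp)), <- (proj2 (Hinv q Hq cq)), E. reflexivity.
  - intros q Hq. destruct (excluded_middle_informative (Ch (g q))) as [c|c].
    + remember (g q) as r eqn:Er. destruct c as [r Hr Hn|p' Hp'].
      * exfalso. apply Hn. eauto.
      * assert (HP' := Ch_P Hp'). assert (q = f p') by (apply jg; auto).
        subst q. exists p'. split; auto. destruct (excluded_middle_informative (Ch p')); [auto|contradiction].
    + exists (g q). split; auto. destruct (excluded_middle_informative (Ch (g q))); [contradiction|].
      apply inv_on_h; auto.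
Qed.
End SBinner.

Lemma tle_inj x y : tle alpha x y -> exists h, Inj (LS x) (LS y) h.
Proof.
  intros [z Hz]. apply teq_equi in Hz as [h [[pw [Hm Hi]] _]]. exists h.
  assert (Hx : forall p, LS x p -> LS (x ++ z) p).
  { intros [i a] Hp. apply LS_app. left. split; auto. apply (LS_bound _ _ Hp). }
  split; [|split].
  - eapply pw_sub; [|exact pw]. exact Hx.
  - intros; apply Hm, Hx; auto.
  - intros; apply Hi; auto.
Qed.

Lemma inj_inj_teq x y h1 h2 : Inj (LS x) (LS y) h1 -> Inj (LS y) (LS x) h2 -> teq x y.
Proof.
  intros H1 H2. destruct (SB_main H1 H2) as [h Hh]. apply equi_teq. exists h; auto.
Qed.

Lemma antisym x y : tle alpha x y -> tle alpha y x -> teq x y.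
Proof.
  intros H1 H2. destruct (tle_inj H1) as [h1 ?], (tle_inj H2) as [h2 ?]. eapply inj_inj_teq; eauto.
Qed.

Lemma bigunion_map (F : nat -> set X) l x : bigunion (map F l) x <-> exists k, In k l /\ F k x.
Proof.
  unfold bigunion. split.
  - intros [B [HB Hx]]. apply in_map_iff in HB as [k [<- Hk]]. eauto.
  - intros [k [Hk Hx]]. exists (F k). split; auto. apply in_map; auto.
Qed.

Lemma pd_map (F : nat -> set X) ks : NoDup ks ->
  (forall k k', In k ks -> In k' ks -> k <> k' -> disjoint (F k) (F k')) -> pairwise_disjoint (map F ks).
Proof.
  intros Hnd HF i j Hi Hj Hij. rewrite length_map in Hi, Hj.
  rewrite (nth_indep _ set0 (F 0)) by (rewrite length_map; auto).
  rewrite (nth_indep _ set0 (F 0) (n:=j)) by (rewrite length_map; auto).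
  rewrite !map_nth. apply HF; try (apply nth_In; auto).
  intro E. apply Hij. eapply NoDup_nth; eauto.
Qed.

Lemma teq_map_act (As : list (set X * Sg)) :
  (forall p, In p As -> subset (fst p) (Dom alpha (snd p))) ->
  teq (map (fun p => img alpha (snd p) (fst p)) As) (map fst As).
Proof.
  induction As; simpl; intros H; [apply teq_refl|].
  apply teq_cons; auto. apply teq_sym, teq_act. auto.
Qed.

Lemma tmul2 (A : set X) : tmul 2 (tcls A) = [A; A].
Proof. reflexivity. Qed.

Lemma para_fwd A : paradoxical alpha A -> teq [A] [A; A].
Proof.
  intros [As [Bs [HA [HB [HdA [HsA [HdB [HsB [Hd Hsub]]]]]]]]].
  set (F := map fst As ++ map fst Bs).
  set (R := fun a => A a /\ ~ bigunion F a).
  assert (H1 : teq [A] (F ++ [R])).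
  { apply teq_trans with [setU (bigunion F) R].
    - apply teq_ext. intro a. unfold setU, R. split; [tauto|].
      intros [H|H]; [apply Hsub; auto| tauto].
    - eapply teq_trans; [apply teq_union|].
      + intros a H [_ H']; auto.
      + apply (teq_app (l := [bigunion F]) (m := [R])); [|apply teq_refl].
        apply teq_dunion; auto. intro; tauto. }
  apply antisym.
  - exists [A]. apply teq_refl.
  - exists [R]. apply teq_sym. eapply teq_trans; [exact H1|].
    unfold F. rewrite <- app_assoc. apply (teq_app (l := map fst As) (l' := [A])).
    + apply teq_sym. eapply teq_trans; [apply (teq_dunion alpha HdA HsA)|]. apply teq_map_act; auto.
    + simpl. apply (teq_app (l := map fst Bs) (l' := [A])); [|apply teq_refl].
      apply teq_sym. eapply teq_trans; [apply (teq_dunion alpha HdB HsB)|]. apply teq_map_act; auto.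
Qed.

Lemma para_bwd A : teq [A] [A; A] -> paradoxical alpha A.
Proof.
  intro H. apply teq_equi in H as [h [[Hpw [Hm Hi]] Hs]].
  destruct (pw_col Hpw) as [ms [c Hc]].
  set (d := ((isg_one Sg, 0), 0) : move Sg).
  set (ks := seq 0 (length ms)).
  set (tgt := fun k => snd (nth k ms d)).
  set (sk := fun k => fst (fst (nth k ms d))).
  set (Pk := fun k a => A a /\ c (0,a) = k).
  set (ks0 := filter (fun k => Nat.eqb (tgt k) 0) ks).
  set (ks1 := filter (fun k => negb (Nat.eqb (tgt k) 0)) ks).
  assert (HA : forall a, A a -> LS [A] (0,a)) by (intros; apply LS_single; auto).
  assert (Hh : forall a, A a -> h (0,a) = (tgt (c (0,a)), ra (sk (c (0,a))) a) /\ rd (sk (c (0,a))) a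
     /\ c (0,a) < length ms).
  { intros a Ha. destruct (Hc _ (HA a Ha)) as [H1 [[_ H2] H3]]. split; auto. }
  assert (Htgt : forall a, A a -> tgt (c (0,a)) = 0 \/ tgt (c (0,a)) = 1).
  { intros a Ha. assert (H' := Hm _ (HA a Ha)). destruct (Hh a Ha) as [E _]. rewrite E in H'.
    apply LS_two in H'. tauto. }
  assert (Hnd : NoDup ks) by apply seq_NoDup.
  assert (Hdisj : forall k k' (ksx : list nat), incl ksx ks -> (forall k, In k ksx -> tgt k = 0) \/ (forall k, In k ksx -> tgt k <> 0) ->
     In k ksx -> In k' ksx -> k <> k' -> disjoint (img alpha (sk k) (Pk k)) (img alpha (sk k') (Pk k'))).
  { intros k k' ksx Hincl Hcase Hk Hk' Hkk b [a [[Ha Ea] ->]] [a' [[Ha' Ea'] E]].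
    assert (Et : tgt k = tgt k').
    { destruct Hcase as [Hc0|Hc0]; [rewrite !Hc0; auto|].
      assert (T1 := Htgt a Ha). assert (T2 := Htgt a' Ha'). rewrite Ea in T1; rewrite Ea' in T2.
      assert (Hb1 := Hc0 k Hk). assert (Hb2 := Hc0 k' Hk'). lia. }
    assert (h (0,a) = h (0,a')).
    { destruct (Hh a Ha) as [E1 _], (Hh a' Ha') as [E2 _]. rewrite E1, E2, Ea, Ea', Et, E. reflexivity. }
    apply Hi in H; auto. injection H; intros; subst. congruence. }
  exists (map (fun k => (Pk k, sk k)) ks0), (map (fun k => (Pk k, sk k)) ks1).
  rewrite !map_map. simpl.
  assert (Hsub : forall k, subset (Pk k) (Dom alpha (sk k))).
  { intros k a [Ha Ea]. apply (Dom_iff alpha). destruct (Hh a Ha) as [_ [H _]]. rewrite Ea in H; auto. }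
  assert (Hin0 : incl ks0 ks) by (intros k Hk; apply filter_In in Hk; tauto).
  assert (Hin1 : incl ks1 ks) by (intros k Hk; apply filter_In in Hk; tauto).
  split; [|split; [|split; [|split; [|split; [|split; [|split]]]]]].
  - intros p Hp. apply in_map_iff in Hp as [k [<- _]]. apply Hsub.
  - intros p Hp. apply in_map_iff in Hp as [k [<- _]]. apply Hsub.
  - apply pd_map; [apply NoDup_filter; auto|]. intros k k' Hk Hk' Hkk. apply (Hdisj k k' ks0); auto.
    left. intros k0 Hk0. apply filter_In in Hk0 as [_ Hk0]. apply Nat.eqb_eq; auto.
  - intro b. rewrite bigunion_map. split.
    + intro Hb. assert (Hq : LS [A;A] (0,b)) by (apply LS_two; auto).
      destruct (Hs _ Hq) as [[i a] [Hp E]]. apply LS_single in Hp as [-> Ha].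
      destruct (Hh a Ha) as [E1 _]. rewrite E1 in E. injection E; intros E2 E3.
      exists (c (0,a)). split.
      * apply filter_In. split; [apply in_seq; destruct (Hh a Ha) as [_ [_ ?]]; lia|]. rewrite E3; reflexivity.
      * exists a. split; [split; auto| auto].
    + intros [k [Hk [a [[Ha Ea] ->]]]]. apply filter_In in Hk as [_ Hk]. apply Nat.eqb_eq in Hk.
      destruct (Hh a Ha) as [E1 _]. assert (H' := Hm _ (HA a Ha)). rewrite E1, Ea, Hk in H'.
      apply LS_two in H'. destruct H' as [[_ ?]|[? _]]; [auto|discriminate].
  - apply pd_map; [apply NoDup_filter; auto|]. intros k k' Hk Hk' Hkk. apply (Hdisj k k' ks1); auto.
    right. intros k0 Hk0. apply filter_In in Hk0 as [_ Hk0]. apply Bool.negb_true_iff, Nat.eqb_neq in Hk0; auto.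
  - intro b. rewrite bigunion_map. split.
    + intro Hb. assert (Hq : LS [A;A] (1,b)) by (apply LS_two; auto).
      destruct (Hs _ Hq) as [[i a] [Hp E]]. apply LS_single in Hp as [-> Ha].
      destruct (Hh a Ha) as [E1 _]. rewrite E1 in E. injection E; intros E2 E3.
      exists (c (0,a)). split.
      * apply filter_In. split; [apply in_seq; destruct (Hh a Ha) as [_ [_ ?]]; lia|]. rewrite E3; reflexivity.
      * exists a. split; [split; auto| auto].
    + intros [k [Hk [a [[Ha Ea] ->]]]]. apply filter_In in Hk as [_ Hk]. apply Bool.negb_true_iff, Nat.eqb_neq in Hk.
      destruct (Hh a Ha) as [E1 _]. assert (H' := Hm _ (HA a Ha)). rewrite E1, Ea in H'.
      apply LS_two in H'. destruct H' as [[? _]|[_ ?]]; [contradiction|auto].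
  - rewrite <- map_app. apply pd_map.
    + eapply Permutation_NoDup; [apply perm_filter_split| exact Hnd].
    + intros k k' _ _ Hkk a [_ E1] [_ E2]. congruence.
  - intros a Ha. rewrite <- map_app in Ha. apply bigunion_map in Ha as [k [_ [Ha _]]]. auto.
Qed.

End SBsec.

Definition eqd {T : Type} (x y : T) : {x = y} + {x <> y} := excluded_middle_informative (x = y).
Definition bool_of (P : Prop) : bool := if excluded_middle_informative P then true else false.
Lemma bool_of_true P : bool_of P = true <-> P.
Proof. unfold bool_of. destruct (excluded_middle_informative P); split; auto; discriminate. Qed.

Section Card.
Variable T : Type.
Definition card (l : list T) := length (nodup eqd l).
Definition inter (A B : list T) := filter (fun x => bool_of (In x B)) A.

Lemma card_cons a l : card (a :: l) = if in_dec eqd a l then card l else S (card l).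
Proof. unfold card; simpl. destruct (in_dec eqd a l); reflexivity. Qed.

Lemma card_incl l1 l2 : incl l1 l2 -> card l1 <= card l2.
Proof.
  intro H. apply NoDup_incl_length; [apply NoDup_nodup|].
  intros x Hx. apply nodup_In. apply nodup_In in Hx. auto.
Qed.

Lemma card_nodup l : NoDup l -> card l = length l.
Proof. intro H; unfold card; rewrite nodup_fixed_point; auto. Qed.

Lemma card_le_length l : card l <= length l.
Proof.
  induction l; auto. rewrite card_cons. destruct (in_dec eqd a l); simpl; lia.
Qed.

Lemma card_cons_le a l : card (a :: l) <= S (card l).
Proof. rewrite card_cons; destruct (in_dec eqd a l); lia. Qed.

Lemma In_inter x A B : In x (inter A B) <-> In x A /\ In x B.
Proof. unfold inter. rewrite filter_In, bool_of_true. tauto. Qed.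

Lemma card_mod A B : card (A ++ B) + card (inter A B) = card A + card B.
Proof.
  induction A as [|a A IH]; simpl.
  - unfold inter, card; simpl; lia.
  - rewrite card_cons. unfold inter at 1; simpl. fold (inter A B).
    rewrite (card_cons a A).
    destruct (in_dec eqd a (A ++ B)) as [H1|H1], (in_dec eqd a A) as [H2|H2];
    unfold bool_of; destruct (excluded_middle_informative (In a B)) as [H3|H3]; try rewrite card_cons;
    try destruct (in_dec eqd a (inter A B)) as [H4|H4]; try rewrite In_inter in H4;
    try (apply in_app_or in H1); try (rewrite in_app_iff in H1); try tauto; lia.
Qed.

Lemma card_0 : card [] = 0.
Proof. reflexivity. Qed.

Lemma card_not_in a l : ~ In a l -> card (a :: l) = S (card l).
Proof. intro H. rewrite card_cons. destruct (in_dec eqd a l); tauto. Qed.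
End Card.

Lemma fin_choice (T : Type) (Pr : nat -> T -> Prop) n :
  (forall r, r < n -> exists t, Pr r t) -> (forall r, ~ r < n -> exists t, Pr r t) ->
  exists f : nat -> T, forall r, Pr r (f r).
Proof.
  intros H1 H2.
  assert (H : forall r, exists t, Pr r t).
  { intro r. destruct (Nat.lt_ge_cases r n); [apply H1; auto| apply H2; lia]. }
  exists (fun r => proj1_sig (constructive_indefinite_description _ (H r))).
  intro r. apply proj2_sig.
Qed.

Section Hall.
Variables (U V : Type) (n : nat) (PU : U -> Prop) (nb : U -> nat -> V).

Definition neigh (W : list U) : list V := flat_map (fun u => map (nb u) (seq 0 n)) W.
Definition NU (Us : V -> Prop) (W : list U) : list V := filter (fun v => negb (bool_of (Us v))) (neigh W).
Definition Hall (D : U -> Prop) (Us : V -> Prop) :=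
  forall W, (forall u, In u W -> PU u /\ ~ D u) -> card W <= card (NU Us W).

Lemma In_neigh v W : In v (neigh W) <-> exists u r, In u W /\ r < n /\ nb u r = v.
Proof.
  unfold neigh. rewrite in_flat_map. split.
  - intros [u [Hu Hv]]. apply in_map_iff in Hv as [r [E Hr]]. apply in_seq in Hr. exists u, r; split; auto; split; auto; lia.
  - intros [u [r [Hu [Hr E]]]]. exists u. split; auto. apply in_map_iff. exists r. split; auto. apply in_seq; lia.
Qed.

Lemma In_NU Us v W : In v (NU Us W) <-> In v (neigh W) /\ ~ Us v.
Proof.
  unfold NU. rewrite filter_In. unfold bool_of. destruct (excluded_middle_informative (Us v)); simpl; intuition discriminate.
Qed.

Lemma NU_app Us W1 W2 : NU Us (W1 ++ W2) = NU Us W1 ++ NU Us W2.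
Proof. unfold NU, neigh. rewrite flat_map_app, filter_app. reflexivity. Qed.

Lemma Hall_ext D D' Us Us' : (forall w, D w -> D' w) -> (forall v, Us v <-> Us' v) -> Hall D Us -> Hall D' Us'.
Proof.
  intros HD HU H W HW. eapply Nat.le_trans; [apply H|].
  - intros u Hu. destruct (HW u Hu). split; auto.
  - apply card_incl. intros v Hv. apply In_NU in Hv as [H1 H2]. apply In_NU. split; auto. rewrite <- HU; auto.
Qed.

Definition crit Us W := card (NU Us W) <= card W.

Lemma crit_app D Us W1 W2 : Hall D Us ->
  (forall u, In u W1 -> PU u /\ ~ D u) -> (forall u, In u W2 -> PU u /\ ~ D u) ->
  crit Us W1 -> crit Us W2 -> crit Us (W1 ++ W2).
Proof.
  unfold crit. intros HH H1 H2 C1 C2. rewrite NU_app.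
  assert (Hi : card (inter W1 W2) <= card (inter (NU Us W1) (NU Us W2))).
  { eapply Nat.le_trans; [apply HH|].
    - intros u Hu. apply In_inter in Hu as [Hu _]. auto.
    - apply card_incl. intros v Hv. rewrite In_NU, In_neigh in Hv. destruct Hv as [[u [r [Hu [Hr E]]]] Hn].
      apply In_inter in Hu as [Hu1 Hu2]. apply In_inter. split; apply In_NU; split; auto; apply In_neigh; eauto. }
  assert (M1 := card_mod (NU Us W1) (NU Us W2)). assert (M2 := card_mod W1 W2). lia.
Qed.

Lemma crit_concat D Us Ws : Hall D Us ->
  (forall W, In W Ws -> (forall u, In u W -> PU u /\ ~ D u) /\ crit Us W) -> crit Us (concat Ws).
Proof.
  intro HH. induction Ws as [|W Ws IH]; simpl; intros H.
  - unfold crit, NU, neigh, card. simpl. lia.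
  - apply crit_app with D; auto.
    + apply H; auto.
    + intros u Hu. apply in_concat in Hu as [W' [HW' Hu]]. apply (H W'); auto.
    + apply H; auto.
Qed.

Lemma step_exists D Us u : Hall D Us -> PU u -> ~ D u ->
  exists r, r < n /\ ~ Us (nb u r) /\ Hall (fun w => D w \/ w = u) (fun v => Us v \/ v = nb u r).
Proof.
  intros HH Hu Hdu. apply NNPP. intro Hno.
  set (Pr := fun r (W : list U) => (forall w, In w W -> PU w /\ ~ D w /\ w <> u) /\ crit Us W /\
     (r < n -> ~ Us (nb u r) -> In (nb u r) (NU Us W))).
  destruct (@fin_choice (list U) Pr n) as [f Hf].
  { intros r Hr. destruct (classic (Us (nb u r))) as [Hus|Hus].
    - exists []. split; [simpl; tauto| split; [unfold crit, NU, neigh, card; simpl; lia| tauto]].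
    - assert (Hn : ~ Hall (fun w => D w \/ w = u) (fun v => Us v \/ v = nb u r)) by (intro; apply Hno; eauto).
      unfold Hall in Hn. apply not_all_ex_not in Hn as [W HW].
      apply imply_to_and in HW as [HW1 HW2].
      assert (HW1' : forall w, In w W -> PU w /\ ~ D w /\ w <> u).
      { intros w Hw. destruct (HW1 w Hw). split; auto. }
      assert (Hle := HH W (fun w Hw => match HW1' w Hw with conj a (conj b _) => conj a b end)).
      assert (Hinc : incl (NU Us W) (nb u r :: NU (fun v => Us v \/ v = nb u r) W)).
      { intros v Hv. rewrite In_NU in Hv. destruct (eqd v (nb u r)) as [->|Hne]; [left; auto| right].
        apply In_NU. split; [tauto|]. intros [?|?]; tauto. }
      assert (C1 := card_incl Hinc). assert (C2 := card_cons_le (nb u r) (NU (fun v => Us v \/ v = nb u r) W)).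
      exists W. split; [auto| split].
      + unfold crit. lia.
      + intros _ _. apply NNPP. intro Hnot.
        assert (Hinc2 : incl (NU Us W) (NU (fun v => Us v \/ v = nb u r) W)).
        { intros v Hv. assert (Hv' := Hv). rewrite In_NU in Hv. apply In_NU. split; [tauto|].
          intros [?|E]; [tauto| subst; contradiction]. }
        assert (C3 := card_incl Hinc2). lia. }
  { intros r Hr. exists []. split; [simpl; tauto| split; [unfold crit, NU, neigh, card; simpl; lia| intros; exfalso; lia]]. }
  set (Wall := concat (map f (seq 0 n))).
  assert (HWall : forall w, In w Wall -> PU w /\ ~ D w /\ w <> u).
  { intros w Hw. apply in_concat in Hw as [W [HW Hw]]. apply in_map_iff in HW as [r [<- _]].
    apply (Hf r); auto. }
  assert (Cr : crit Us Wall).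
  { apply crit_concat with D; auto. intros W HW. apply in_map_iff in HW as [r [<- _]].
    split; [intros w Hw; destruct (proj1 (Hf r) w Hw) as [? [? _]]; auto| apply Hf]. }
  assert (HW' := HH (u :: Wall)).
  assert (Hsub : incl (NU Us (u :: Wall)) (NU Us Wall)).
  { intros v Hv. apply In_NU in Hv as [Hv Hn]. apply In_neigh in Hv as [w [r [Hw [Hr E]]]].
    destruct Hw as [<-|Hw].
    - subst v. assert (Hin := proj2 (proj2 (Hf r)) Hr Hn). apply In_NU in Hin as [Hin _].
      apply In_NU; split; auto. apply In_neigh in Hin as [w' [r' [Hw' [Hr' E']]]].
      apply In_neigh. exists w', r'. split; auto. apply in_concat. exists (f r). split; auto.
      apply in_map, in_seq; lia.
    - apply In_NU. split; auto. apply In_neigh; eauto. }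
  assert (C1 := card_incl Hsub).
  assert (Hnot : ~ In u Wall) by (intro H; destruct (HWall u H) as [_ [_ ?]]; auto).
  rewrite (@card_not_in _ u Wall Hnot) in HW'.
  unfold crit in Cr.
  assert (S (card Wall) <= card (NU Us (u :: Wall))).
  { apply HW'. intros w [<-|Hw]; [auto|]. destruct (HWall w Hw) as [? [? _]]; auto. }
  lia.
Qed.

Record st := mkst { sD : U -> Prop; sM : U -> nat }.
Definition sUsed (s : st) : V -> Prop := fun v => exists w, sD s w /\ nb w (sM s w) = v.
Definition Inv (s : st) :=
  (forall w, sD s w -> PU w /\ sM s w < n) /\
  (forall w w', sD s w -> sD s w' -> nb w (sM s w) = nb w' (sM s w') -> w = w') /\
  Hall (sD s) (sUsed s).

Definition stepP (s : st) (u : U) (r : nat) :=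
  PU u /\ ~ sD s u /\ Inv s /\ r < n /\ ~ sUsed s (nb u r) /\
  Hall (fun w => sD s w \/ w = u) (fun v => sUsed s v \/ v = nb u r).

Definition step (s : st) (u : U) : st :=
  match excluded_middle_informative (exists r, stepP s u r) with
  | left H => let r := proj1_sig (constructive_indefinite_description _ H) in
      mkst (fun w => sD s w \/ w = u) (fun w => if eqd w u then r else sM s w)
  | right _ => s end.

Lemma step_mono s u w : sD s w -> sD (step s u) w /\ sM (step s u) w = sM s w.
Proof.
  intro H. unfold step. destruct (excluded_middle_informative _) as [E|E]; [|auto].
  destruct (constructive_indefinite_description _ E) as [r Hr]; simpl.
  split; [left; auto|]. destruct (eqd w u) as [->|]; auto. destruct Hr as [_ [Hn _]]; contradiction.
Qed.

Lemma step_inv s u : Inv s -> Inv (step s u).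
Proof.
  intro HI. unfold step. destruct (excluded_middle_informative _) as [E|E]; [|auto].
  destruct (constructive_indefinite_description _ E) as [r Hr0]; simpl.
  destruct Hr0 as [Hu [Hdu [_ [Hr [Hus HH]]]]].
  destruct HI as [I1 [I2 I3]].
  assert (Hold : forall w, sD s w -> w <> u) by (intros w Hw ->; auto).
  split; [|split].
  - intros w Hw. simpl in Hw |- *. destruct (eqd w u) as [->|Hne]; [split; auto|].
    destruct Hw as [Hw|]; [apply I1; auto| congruence].
  - intros w w' Hw Hw'. simpl in Hw, Hw' |- *. destruct (eqd w u) as [->|Hne], (eqd w' u) as [->|Hne']; auto.
    + destruct Hw' as [Hw'|]; [|congruence]. intro Ee. exfalso. apply Hus. exists w'. split; auto.
    + destruct Hw as [Hw|]; [|congruence]. intro Ee. exfalso. apply Hus. exists w. split; auto.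
    + destruct Hw as [Hw|]; [|congruence]. destruct Hw' as [Hw'|]; [|congruence]. apply I2; auto.
  - eapply Hall_ext; [| |exact HH]; [intros; auto|].
    intro v. unfold sUsed; simpl. split.
    + intros [[w [Hw Ev]]|Ev].
      * exists w. split; auto. destruct (eqd w u) as [->|]; auto. exfalso; apply Hdu; auto.
      * exists u. split; auto. destruct (eqd u u); [auto|congruence].
    + intros [w [[Hw| ->] Ev]].
      * left. exists w. split; auto. destruct (eqd w u) as [->|]; auto. exfalso; apply Hdu; auto.
      * right. destruct (eqd u u); [auto|congruence].
Qed.

Lemma step_covers s u : Inv s -> PU u -> sD (step s u) u.
Proof.
  intros HI Hu. destruct (classic (sD s u)) as [H|H]; [apply step_mono; auto|].
  unfold step. destruct (excluded_middle_informative _) as [E|E].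
  - destruct (constructive_indefinite_description _ E); simpl; right; reflexivity.
  - exfalso. apply E. destruct HI as [I1 [I2 I3]].
    destruct (step_exists I3 Hu H) as [r [Hr [Hus HH]]]. exists r.
    split; [auto|split; [auto|split; [split; [exact I1|split; [exact I2|exact I3]]|split; [auto|split; auto]]]].
Qed.

Definition run (s : st) (l : list U) : st := fold_left step l s.

Lemma run_inv l : forall s, Inv s -> Inv (run s l).
Proof. induction l; simpl; auto. intros s H. apply IHl, step_inv; auto. Qed.

Lemma run_mono l : forall s w, sD s w -> sD (run s l) w /\ sM (run s l) w = sM s w.
Proof.
  induction l; simpl; auto. intros s w H. destruct (step_mono s a w H) as [H1 H2].
  destruct (IHl _ _ H1) as [H3 H4]. split; auto. congruence.
Qed.

Lemma run_covers l : forall s u, Inv s -> In u l -> PU u -> sD (run s l) u.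
Proof.
  induction l as [|a l IH]; simpl; intros s u HI Hin Hu; [contradiction|].
  destruct Hin as [<-|Hin].
  - apply run_mono. apply step_covers; auto.
  - apply IH; auto. apply step_inv; auto.
Qed.

Variable nbl : U -> list U.
Definition adj u u' := PU u /\ PU u' /\ exists r r', r < n /\ r' < n /\ nb u r = nb u' r'.
Hypothesis Hnbl : forall u u', adj u u' -> In u' (nbl u).
Hypothesis Hall0 : Hall (fun _ => False) (fun _ => False).

Fixpoint ball (w : U) (k : nat) : list U :=
  match k with 0 => [w] | S k => ball w k ++ flat_map nbl (ball w k) end.

Definition s0 := mkst (fun _ => False) (fun _ => 0).

Lemma Inv_s0 : Inv s0.
Proof.
  split; [simpl; tauto| split; [simpl; tauto|]].
  eapply Hall_ext; [| |exact Hall0]; auto. intro v. unfold sUsed; simpl. split; [tauto| intros [? []]; tauto].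
Qed.

Fixpoint stage (w : U) (k : nat) : st :=
  match k with 0 => s0 | S k => run (stage w k) (ball w k) end.

Lemma stage_inv w k : Inv (stage w k).
Proof. induction k; simpl; [apply Inv_s0| apply run_inv; auto]. Qed.

Lemma stage_mono w k k' u : k <= k' -> sD (stage w k) u ->
  sD (stage w k') u /\ sM (stage w k') u = sM (stage w k) u.
Proof.
  induction 1; [auto|]. intro H0. destruct (IHle H0) as [H1 H2]. simpl.
  destruct (run_mono (ball w m) _ _ H1) as [H3 H4]. split; auto. congruence.
Qed.

Definition conn := clos_refl_trans U adj.

Lemma ball_mono w k k' u : k <= k' -> In u (ball w k) -> In u (ball w k').
Proof. induction 1; auto. intros H0. simpl. apply in_or_app; auto. Qed.

Lemma conn_ball w u : conn w u -> exists k, In u (ball w k).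
Proof.
  intro H. apply clos_rt_rtn1 in H. induction H.
  - exists 0; simpl; auto.
  - destruct IHclos_refl_trans_n1 as [k Hk]. exists (S k). simpl. apply in_or_app. right.
    apply in_flat_map. exists y. split; auto.
Qed.

Lemma adj_sym u u' : adj u u' -> adj u' u.
Proof. intros [H1 [H2 [r [r' [? [? E]]]]]]. split; auto; split; auto. exists r', r. auto. Qed.

Lemma conn_sym u u' : conn u u' -> conn u' u.
Proof.
  induction 1.
  - apply rt_step, adj_sym; auto.
  - apply rt_refl.
  - eapply rt_trans; eauto.
Qed.

Definition Kc (w u : U) : nat :=
  match excluded_middle_informative (exists k, sD (stage w k) u) with
  | left H => proj1_sig (constructive_indefinite_description _ H) | right _ => 0 end.
Definition Sol (w u : U) : nat := sM (stage w (Kc w u)) u.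

Lemma Kc_spec w u : (exists k, sD (stage w k) u) -> sD (stage w (Kc w u)) u.
Proof.
  intro H. unfold Kc. destruct (excluded_middle_informative _); [|contradiction]. apply proj2_sig.
Qed.

Lemma Sol_at w u k : sD (stage w k) u -> Kc w u <= k -> sD (stage w k) u /\ sM (stage w k) u = Sol w u.
Proof.
  intros H Hk. unfold Sol. apply stage_mono; auto. apply Kc_spec; eauto.
Qed.

Lemma Sol_good w u u' : conn w u -> conn w u' -> PU u -> PU u' ->
  Sol w u < n /\ (nb u (Sol w u) = nb u' (Sol w u') -> u = u').
Proof.
  intros C1 C2 Hu Hu'. destruct (conn_ball C1) as [k1 Hk1]. destruct (conn_ball C2) as [k2 Hk2].
  assert (D1 : sD (stage w (S k1)) u) by (apply run_covers; auto; apply stage_inv).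
  assert (D2 : sD (stage w (S k2)) u') by (apply run_covers; auto; apply stage_inv).
  set (k := Kc w u + Kc w u' + S k1 + S k2).
  assert (E1 : sD (stage w k) u /\ sM (stage w k) u = Sol w u).
  { apply Sol_at; [|unfold k; lia]. apply stage_mono with (S k1); auto; unfold k; lia. }
  assert (E2 : sD (stage w k) u' /\ sM (stage w k) u' = Sol w u').
  { apply Sol_at; [|unfold k; lia]. apply stage_mono with (S k2); auto; unfold k; lia. }
  destruct (stage_inv w k) as [I1 [I2 _]]. destruct E1 as [E1 F1], E2 as [E2 F2].
  split; [rewrite <- F1; apply I1; auto|].
  rewrite <- F1, <- F2. apply I2; auto.
Qed.

Definition rootP (P : U -> Prop) (H : exists w, P w) : U := proj1_sig (constructive_indefinite_description _ H).
Lemma rootP_eq P Q H1 H2 : P = Q -> rootP P H1 = rootP Q H2.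
Proof. intros ->. f_equal. apply proof_irrelevance. Qed.

Definition root (u : U) : U := rootP (fun w => conn u w) (ex_intro _ u (rt_refl _ _ u)).

Lemma root_conn u : conn u (root u).
Proof. unfold root, rootP. apply (proj2_sig (constructive_indefinite_description _ _)). Qed.

Lemma root_eq u u' : conn u u' -> root u = root u'.
Proof.
  intro H. apply rootP_eq. apply functional_extensionality. intro w.
  apply propositional_extensionality. split; intro H'.
  - eapply rt_trans; [apply conn_sym; exact H| exact H'].
  - eapply rt_trans; eauto.
Qed.

Theorem hall_match : exists M : U -> nat, (forall u, PU u -> M u < n) /\
  (forall u u', PU u -> PU u' -> nb u (M u) = nb u' (M u') -> u = u').
Proof.
  exists (fun u => Sol (root u) u). split.
  - intros u Hu. apply (Sol_good (u' := u)); auto; apply conn_sym, root_conn.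
  - intros u u' Hu Hu' E.
    assert (Hr1 : Sol (root u) u < n) by (apply (Sol_good (u' := u)); auto; apply conn_sym, root_conn).
    assert (Hr2 : Sol (root u') u' < n) by (apply (Sol_good (u' := u')); auto; apply conn_sym, root_conn).
    assert (Ha : conn u u') by (apply rt_step; split; auto; split; auto; exists (Sol (root u) u), (Sol (root u') u'); auto).
    assert (Er := root_eq Ha). rewrite <- Er in E.
    eapply Sol_good; [| | | |exact E]; auto.
    + apply conn_sym, root_conn.
    + rewrite Er. apply conn_sym, root_conn.
Qed.

End Hall.

Lemma NoDup_prod (A B : Type) (l : list A) (l' : list B) : NoDup l -> NoDup l' -> NoDup (list_prod l l').
Proof.
  induction 1 as [|a l Ha Hl IH]; intros Hl'; simpl; [constructor|].
  apply NoDup_app; auto.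
  - apply NoDup_map_NoDup_ForallPairs; auto. intros y y' _ _ E. injection E; auto.
  - intros [a' b] H1 H2. apply in_map_iff in H1 as [y [E _]]. injection E; intros; subst.
    apply in_prod_iff in H2 as [H2 _]. contradiction.
Qed.

Lemma divmod_small lx r i : i < lx -> (r * lx + i) / lx = r /\ (r * lx + i) mod lx = i.
Proof.
  intro H. split.
  - symmetry. apply Nat.div_unique with i; auto. lia.
  - symmetry. apply Nat.mod_unique with r; auto. lia.
Qed.

Section Cancel.
Variables (Sg : InvSemigroup) (X : Type) (alpha : Rep Sg X).
Notation rd := (rdom alpha).
Notation ra := (ract alpha).
Notation LS := (@LS X).
Notation teq := (teq alpha).
Notation Inj := (Inj alpha).
Notation Bij := (Bij alpha).

Lemma tmul_length n (x : Typ X) : length (tmul n x) = n * length x.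
Proof. induction n; simpl; auto. unfold tadd. rewrite length_app. lia. Qed.

Lemma LS_tmul n x i a : LS (tmul n x) (i,a) <-> i < n * length x /\ LS x (i mod length x, a).
Proof.
  revert i. induction n; intro i; simpl.
  - unfold LS; simpl. split; [destruct i; intros []| lia].
  - unfold tadd. rewrite LS_app, IHn. split.
    + intros [[H1 H2]|[H1 [H2 H3]]].
      * split; [lia|]. rewrite Nat.mod_small; auto.
      * split; [lia|]. replace i with ((i - length x) + 1 * length x) by lia.
        rewrite Nat.Div0.mod_add. auto.
    + intros [H1 H2]. destruct (Nat.lt_ge_cases i (length x)) as [H|H].
      * left. rewrite Nat.mod_small in H2; auto.
      * right. split; [auto|]. split; [lia|].
        replace i with ((i - length x) + 1 * length x) in H2 by lia.
        rewrite Nat.Div0.mod_add in H2. auto.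
Qed.

Lemma cancel_inj n x y : 1 <= n -> teq (tmul n x) (tmul n y) -> exists h, Inj (LS x) (LS y) h.
Proof.
  intros Hn Ht. apply teq_equi in Ht as [H [[Hpw [Hm Hi]] Hs]].
  set (nb := fun (u : pt X) r => let q := H (r * (length x) + fst u, snd u) in (fst q mod (length y), snd q)).
  set (Hinv := inv_on (LS (tmul n x)) H).
  set (nbl := fun u : pt X => flat_map (fun r => map (fun r' =>
     let v := nb u r in let p := Hinv (r' * (length y) + fst v, snd v) in (fst p mod (length x), snd p)) (seq 0 n)) (seq 0 n)).
  assert (Hpt : forall i a r, LS x (i,a) -> r < n -> LS (tmul n x) (r * (length x) + i, a)).
  { intros i a r Ha Hr. assert (Hb := LS_bound _ _ Ha). simpl in Hb. apply LS_tmul.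
    destruct (divmod_small r Hb) as [_ ->]. split; auto. nia. }
  assert (HQ : forall q, LS (tmul n y) q -> fst q / (length y) < n /\ fst q = fst q / (length y) * (length y) + fst q mod (length y) /\
     LS y (fst q mod (length y), snd q)).
  { intros [j b] Hq. apply LS_tmul in Hq as [H1 H2]. simpl. split; [|split; auto].
    - apply Nat.Div0.div_lt_upper_bound. lia.
    - rewrite (Nat.div_mod_eq j (length y)) at 1. lia. }
  assert (Hnbin : forall u r, LS x u -> r < n -> LS y (nb u r)).
  { intros [i a] r Hu Hr. unfold nb. apply HQ, Hm, Hpt; auto. }
  destruct (@hall_match (pt X) (pt X) n (LS x) nb nbl) as [M [HM1 HM2]].
  - intros [i a] [i' a'] [Hu [Hu' [r [r' [Hr [Hr' E]]]]]].
    unfold nbl. apply in_flat_map. exists r. split; [apply in_seq; lia|].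
    set (q' := H (r' * (length x) + i', a')).
    assert (Hq' : LS (tmul n y) q') by (apply Hm, Hpt; auto).
    destruct (HQ q' Hq') as [Q1 [Q2 Q3]].
    apply in_map_iff. exists (fst q' / (length y)). split; [|apply in_seq; lia].
    cbv zeta. rewrite E. unfold nb. cbv zeta. change (H (r' * length x + fst (i', a'), snd (i', a'))) with q'. cbn [fst snd]. rewrite <- Q2.
    replace (fst q', snd q') with q' by (destruct q'; reflexivity).
    unfold Hinv, q'. rewrite inv_on_h by (auto; apply Hpt; auto). simpl.
    assert (Hb := LS_bound _ _ Hu'). simpl in Hb. destruct (divmod_small r' Hb) as [_ ->]. reflexivity.
  - intros W HW. eapply Nat.le_trans; [|apply card_incl; intros v Hv; apply In_NU; split; [exact Hv| tauto]].
    set (W' := nodup eqd W).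
    set (Src := map (fun p => H (fst p * (length x) + fst (snd p), snd (snd p))) (list_prod (seq 0 n) W')).
    set (Dst := map (fun p => (fst p * (length y) + fst (snd p), snd (snd p))) (list_prod (seq 0 n) (nodup eqd (neigh n nb W)))).
    assert (HW' : forall u, In u W' -> LS x u) by (intros u Hu; apply nodup_In in Hu; apply HW; auto).
    assert (N1 : NoDup Src).
    { apply NoDup_map_NoDup_ForallPairs; [|apply NoDup_prod; [apply seq_NoDup| apply NoDup_nodup]].
      intros [r [i a]] [r' [i' a']] H1 H2 E. apply in_prod_iff in H1 as [H1 H1'], H2 as [H2 H2'].
      apply in_seq in H1, H2. simpl in E. apply HW' in H1', H2'.
      apply Hi in E; [|apply Hpt; auto; lia| apply Hpt; auto; lia].
      injection E; intros Ea Eb; subst a'.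
      assert (B1 := LS_bound _ _ H1'). assert (B2 := LS_bound _ _ H2'). simpl in B1, B2.
      destruct (divmod_small r B1) as [D1 M1]. destruct (divmod_small r' B2) as [D2 M2].
      rewrite Eb in D1, M1. rewrite D1 in D2. rewrite M1 in M2. rewrite <- D2, <- M2. reflexivity. }
    assert (I1 : incl Src Dst).
    { intros q Hq. unfold Src in Hq. apply in_map_iff in Hq as [[r [i a]] [<- Hp]].
      apply in_prod_iff in Hp as [Hr Hu]. apply in_seq in Hr. simpl.
      set (q := H (r * (length x) + i, a)).
      assert (Hq : LS (tmul n y) q) by (apply Hm, Hpt; [apply HW'; auto| lia]).
      destruct (HQ q Hq) as [Q1 [Q2 Q3]].
      apply in_map_iff. exists (fst q / (length y), (fst q mod (length y), snd q)). split.
      - simpl. rewrite <- Q2. destruct q; reflexivity.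
      - apply in_prod_iff. split; [apply in_seq; lia|]. apply nodup_In, In_neigh.
        exists (i,a), r. split; [apply nodup_In in Hu; auto|]. split; [lia|]. reflexivity. }
    assert (L := NoDup_incl_length N1 I1). unfold Src, Dst in L. rewrite !length_map, !length_prod, length_seq in L.
    unfold card. fold W'. apply (Nat.mul_le_mono_pos_l _ _ n); [lia| exact L].
  - exists (fun u => nb u (M u)). split; [|split].
    + destruct Hpw as [ms Hms].
      exists (map (fun m : move Sg => ((fst (fst m), snd (fst m) mod (length x)), snd m mod (length y))) ms).
      intros [i a] Hu. assert (Hp := Hpt i a (M (i,a)) Hu (HM1 _ Hu)).
      destruct (Hms _ Hp) as [m [Im [[O1 O2] E]]].
      exists ((fst (fst m), snd (fst m) mod (length x)), snd m mod (length y)). split; [apply (in_map (fun m : move Sg => ((fst (fst m), snd (fst m) mod (length x)), snd m mod (length y)))); auto|].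
      assert (Hb := LS_bound _ _ Hu). simpl in Hb, O1.
      split; [split; auto|].
      * simpl. rewrite <- O1. destruct (divmod_small (M (i,a)) Hb) as [_ ->]. reflexivity.
      * unfold nb. simpl. rewrite E. reflexivity.
    + intros u Hu. apply Hnbin; auto.
    + intros u u' Hu Hu'. apply HM2; auto.
Qed.

Lemma cancel n x y : 1 <= n -> teq (tmul n x) (tmul n y) -> teq x y.
Proof.
  intros Hn Ht. assert (Ht' := teq_sym Ht).
  destruct (cancel_inj x y Hn Ht) as [h1 H1].
  destruct (cancel_inj y x Hn Ht') as [h2 H2].
  eapply inj_inj_teq; eauto.
Qed.

End Cancel.

Section Final.
Variables (Sg : InvSemigroup) (X : Type) (alpha : Rep Sg X).
Notation LS := (@LS X).
Notation teq := (teq alpha).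

Lemma tmul_add a b (x : Typ X) : tmul (a + b) x = tmul a x ++ tmul b x.
Proof. induction a; simpl; auto. unfold tadd. rewrite IHa, app_assoc. reflexivity. Qed.

Lemma tmul_2 n (x : Typ X) : tmul n (tmul 2 x) = tmul (n + n) x.
Proof.
  induction n; [reflexivity|].
  change (tmul (S n) (tmul 2 x)) with (tmul 2 x ++ tmul n (tmul 2 x)). rewrite IHn.
  rewrite Nat.add_succ_r. change (tmul (S (S (n+n))) x) with (x ++ (x ++ tmul (n+n) x)).
  change (tmul 2 x) with (x ++ (x ++ [])). rewrite app_nil_r, <- app_assoc. reflexivity.
Qed.

Lemma tle_trans a b c : tle alpha a b -> tle alpha b c -> tle alpha a c.
Proof.
  intros [z Hz] [z' Hz']. exists (z ++ z'). unfold tadd in *. rewrite app_assoc.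
  eapply teq_trans; [apply teq_addr; exact Hz| exact Hz'].
Qed.

Lemma tle_addr a b c : tle alpha a b -> tle alpha (a ++ c) (b ++ c).
Proof.
  intros [z Hz]. exists z. unfold tadd in *. eapply teq_trans; [|apply teq_addr; exact Hz].
  apply teq_perm. rewrite <- !app_assoc. apply Permutation_app_head, Permutation_app_comm.
Qed.

Lemma tle_refl a : tle alpha a a.
Proof. exists []. unfold tadd. rewrite app_nil_r. apply teq_refl. Qed.

Lemma partd (x : Typ X) n : tle alpha (tmul (n + 1) x) (tmul n x) -> teq x (tmul 2 x).
Proof.
  intro H. destruct n as [|n].
  - destruct H as [z Hz]. apply teq_equi in Hz as [h [[_ [Hm _]] _]].
    assert (He : forall p, ~ LS x p).
    { intros [i a] Hp. assert (Hb := LS_bound _ _ Hp).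
      assert (Hq : LS (tmul 0 x) (h (i,a))).
      { apply Hm. simpl. unfold tadd. rewrite app_nil_r. apply LS_app. left. split; auto. }
      unfold LS in Hq. simpl in Hq. destruct (fst (h (i,a))); exact Hq. }
    apply equi_teq. exists (fun p => p). apply Bij_id with (N := 0).
    + intros [i a]. split; [intro Hp; exfalso; apply (He _ Hp)|].
      intro Hp. apply LS_tmul in Hp as [_ Hp]. exfalso; eapply He; eauto.
    + intros p Hp; exfalso; apply (He _ Hp).
  - set (m := S n).
    assert (Hk : forall k, tle alpha (tmul (m + k) x) (tmul m x)).
    { induction k.
      - rewrite Nat.add_0_r. apply tle_refl.
      - eapply tle_trans; [|exact IHk].
        replace (m + S k) with ((m + 1) + k) by lia. rewrite !tmul_add.
        rewrite tmul_add in H. rewrite <- tmul_add. apply tle_addr. rewrite <- tmul_add in H. exact H. }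
    assert (E : teq (tmul m x) (tmul m (tmul 2 x))).
    { rewrite tmul_2. apply antisym.
      - exists (tmul m x). unfold tadd. rewrite <- tmul_add. apply teq_refl.
      - apply Hk. }
    apply (cancel (n := m)); [unfold m; lia| exact E].
Qed.

End Final.

Theorem mainTheorem13 (S : InvSemigroup) (X : Type) (alpha : Rep S X)
  (Scount : countable S) :
  (forall x y : Typ X, tle alpha x y -> tle alpha y x -> teq alpha x y) /\
  (forall A : set X, paradoxical alpha A <->
     teq alpha (tcls A) (tmul 2 (tcls A))) /\
  (forall (x y : Typ X) (n : nat), 1 <= n ->
     teq alpha (tmul n x) (tmul n y) -> teq alpha x y) /\
  (forall (x : Typ X) (n : nat), tle alpha (tmul (n + 1) x) (tmul n x) ->
     teq alpha x (tmul 2 x)).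
Proof.
  split; [|split; [|split]].
  - intros x y; apply antisym.
  - intro A. rewrite tmul2. split; [apply para_fwd| apply para_bwd].
  - intros x y n Hn H. eapply cancel; eauto.
  - intros x n H. eapply partd; eauto.
Qed.
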